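(* Let $n\ge1$, $k\ge1$, and let ${\bf u}_1,\ldots,{\bf u}_k\in\mathbb{R}^n$ (or indeterminate points). Define $$p^n_k({\bf x})=\prod_{\sigma\in\{0,1\}^k}\Bigl(d-\sum_{i=1}^k(-1)^{\sigma_i}\|{\bf u}_i-{\bf x}\|\Bigr),\qquad \|{\bf u}_i-{\bf x}\|=\sqrt{\textstyle\sum_{j=1}^n(u_{ij}-x_j)^2}.$$ Then $p^n_k$ is a polynomial which is monic of degree $2^k$ in $d$, and (with $d$ an indeterminate) its total degree in ${\bf x}=(x_1,\ldots,x_n)$ is $2^k$ if $k$ is odd and $2^k-\binom{k}{k/2}$ if $k$ is even.
   Context: The $k$-ellipsoid with foci ${\bf u}_i$ and radius $d$ is $\{{\bf x}\in\mathbb{R}^n:\sum_i\|{\bf u}_i-{\bf x}\|=d\}$; $p^n_k$ is its defining polynomial. *)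

(* Defs.v *)
From HB Require Import structures.
From mathcomp Require Import all_boot all_order all_algebra.
From mathcomp Require Import mpoly.
Set Implicit Arguments. Unset Strict Implicit. Unset Printing Implicit Defensive.
Import Order.TTheory GRing.Theory Num.Theory.
Local Open Scope ring_scope.

Definition edist (R : rcfType) (n : nat) (u x : 'I_n -> R) : R :=
  Num.sqrt (\sum_(j < n) (u j - x j) ^+ 2).

Definition pnk_val (R : rcfType) (n k : nat) (u : 'I_k -> 'I_n -> R)
    (d : R) (x : 'I_n -> R) : R :=
  \prod_(s : {ffun 'I_k -> bool})
     (d - \sum_(i < k) (-1) ^+ (s i) * edist (u i) x).

(* Main.v *)
Require Import Defs.
From HB Require Import structures.
From mathcomp Require Import all_boot all_order all_algebra.
From mathcomp Require Import mpoly.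
From mathcomp Require Import ring lra zify.
Import Order.TTheory GRing.Theory Num.Theory.
Local Open Scope ring_scope.
Set Implicit Arguments. Unset Strict Implicit. Unset Printing Implicit Defensive.
Section PartA.
Variable A : comNzRingType.

Definition GHstep (a : A) (c : A) (gh : {poly A} * {poly A}) :=
  (c%:P + 'X * gh.1 - a *: gh.2, 'X * gh.2 - gh.1).
Definition GH (a : A) (s : seq A) := foldr (GHstep a) (0,0) s.
Definition Tr (a : A) (f : {poly A}) :=
  (GH a f).1 ^+ 2 - a *: (GH a f).2 ^+ 2.

Lemma GH_eval (R : comNzRingType) (phi : {rmorphism A -> R}) a rho d (s : seq A) :
  rho ^+ 2 = phi a ->
  (map_poly phi (Poly s)).[d - rho] =
  (map_poly phi (GH a s).1).[d] + rho * (map_poly phi (GH a s).2).[d].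
Proof.
move=> Hr; elim: s => [|c s IH] /=.
  by rewrite !rmorph0 !horner0 mulr0 addr0.
rewrite cons_poly_def.
rewrite !(rmorphD, rmorphM, rmorphB) /= !(map_polyX, map_polyC, map_polyZ) /=.
rewrite !rmorphN /= map_polyZ /= !hornerE IH -Hr; ring.
Qed.

Lemma Tr_eval (R : comNzRingType) (phi : {rmorphism A -> R}) a rho d f :
  rho ^+ 2 = phi a ->
  (map_poly phi (Tr a f)).[d] =
  (map_poly phi f).[d - rho] * (map_poly phi f).[d + rho].
Proof.
move=> Hr.
have Hr' : (- rho) ^+ 2 = phi a by rewrite sqrrN.
have E1 := GH_eval (phi:=phi) d f Hr.
have E2 := GH_eval (phi:=phi) d f Hr'.
rewrite polyseqK in E1 E2.
rewrite opprK in E2.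
rewrite E1 E2 /Tr rmorphB /= map_polyZ /= !rmorphXn /= hornerD hornerN hornerZ !horner_exp -Hr; ring.
Qed.

Lemma GH_size a (s : seq A) :
  (size (GH a s).1 <= size s)%N /\ (size (GH a s).2 <= (size s).-1)%N /\
  (GH a s).1`_(size s).-1 = last 0 s.
Proof.
elim: s => [|c s [IH1 [IH2 IH3]]] /=.
  by rewrite size_poly0 coef0.
split; last split.
- apply/leq_sizeP => j Hj.
  rewrite !coefE.
  have -> : (GH a s).1`_j.-1 = 0 by apply/(leq_sizeP _ _ IH1); lia.
  have -> : (GH a s).2`_j = 0 by apply/(leq_sizeP _ _ IH2); lia.
  case: j Hj => // j Hj /=; rewrite mulr0; by rewrite subr0 addr0.
- apply/leq_sizeP => j Hj.
  rewrite !coefE.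
  have -> : (GH a s).1`_j = 0 by apply/(leq_sizeP _ _ IH1); lia.
  have -> : (GH a s).2`_j.-1 = 0 by apply/(leq_sizeP _ _ IH2); lia.
  by case: (j == 0)%N; rewrite subr0.
- rewrite !coefE.
  case: s IH1 IH2 IH3 => [|c' s] IH1 IH2 IH3 /=.
    by rewrite !coefE /= mulr0 subr0 addr0.
  rewrite IH3.
  have -> : (GH a (c' :: s)).2`_(size s).+1 = 0.
    by apply/(leq_sizeP _ _ IH2); rewrite /=.
  by rewrite mulr0 subr0 add0r.
Qed.
End PartA.
Lemma size_lead1 (A : nzSemiRingType) (p : {poly A}) N :
  (size p <= N.+1)%N -> p`_N = 1 -> size p = N.+1 /\ p \is monic.
Proof.
move=> H1 H2.
have Hs : size p = N.+1.
  apply/eqP; rewrite eqn_leq H1 /=; rewrite ltnNge; apply/negP => H.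
  by move: H2; rewrite nth_default // => /eqP; rewrite eq_sym oner_eq0.
split => //; by rewrite monicE lead_coefE Hs /= H2.
Qed.

Lemma Tr_size (A : comNzRingType) (a : A) (f : {poly A}) N :
  size f = N.+1 -> f \is monic -> size (Tr a f) = (N.*2).+1 /\ Tr a f \is monic.
Proof.
move=> Hs Hm.
have [G1 [G2 G3]] := GH_size a f.
rewrite Hs /= in G1 G2 G3.
have Hl : last 0 (polyseq f) = 1.
  by rewrite -nth_last -lead_coefE; exact/monicP.
rewrite Hl in G3.
have [Sg Mg] := size_lead1 G1 G3.
set g := (GH a f).1 in Sg Mg G3 *; set h := (GH a f).2 in G2 *.
have Mg2 : g ^+ 2 \is monic by apply: monic_exp.
have Sg2 : size (g ^+ 2) = (N.*2).+1.
  rewrite expr2 size_monicM //; last by rewrite -size_poly_eq0 Sg.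
  by rewrite Sg; rewrite -addnn addnS.
have Sh2 : (size (a *: h ^+ 2) <= N.*2)%N.
  apply: leq_trans (size_scale_leq _ _) _.
  rewrite expr2; apply: leq_trans (size_polyMleq _ _) _.
  case: N Hs G2 {Sg Sg2 G3 G1} => [|N] Hs G2.
    by move: G2; rewrite leqn0 size_poly_eq0 => /eqP ->; rewrite size_poly0.
  have : (size h + size h <= N.+1 + N.+1)%N by apply: leq_add.
  rewrite -addnn; lia.
apply: size_lead1.
  rewrite /Tr; apply: leq_trans (size_polyD _ _) _.
  rewrite size_polyN Sg2 geq_max leqnn /=; exact: leq_trans Sh2 (leqnSn _).
rewrite /Tr coefB.
have -> : (a *: h ^+ 2)`_(N.*2) = 0 by apply/(leq_sizeP _ _ Sh2).
move: Mg2; rewrite monicE lead_coefE Sg2 /= => /eqP ->; by rewrite subr0.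
Qed.

Fixpoint PP (A : comNzRingType) (k : nat) : ('I_k -> A) -> {poly A} :=
  match k with
  | 0 => fun _ => 'X
  | k'.+1 => fun a => Tr (a ord0) (PP (fun i : 'I_k' => a (lift ord0 i)))
  end.

Lemma PP_size (A : comNzRingType) k (a : 'I_k -> A) :
  size (PP a) = (2 ^ k).+1 /\ PP a \is monic.
Proof.
elim: k a => [|k IH] a /=.
  by rewrite size_polyX monicX.
have [S M] := IH (fun i : 'I_k => a (lift ord0 i)).
have [S' M'] := Tr_size (a ord0) S M.
by rewrite S' M' expnS mul2n.
Qed.
Definition cons_ff k (b : bool) (s : {ffun 'I_k -> bool}) : {ffun 'I_k.+1 -> bool} :=
  [ffun i => if unlift ord0 i is Some j then s j else b].

Lemma big_ffunS (R : Type) (idx : R) (op : Monoid.com_law idx) k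
  (F : {ffun 'I_k.+1 -> bool} -> R) :
  \big[op/idx]_(s : {ffun 'I_k.+1 -> bool}) F s =
  \big[op/idx]_(b : bool) \big[op/idx]_(s : {ffun 'I_k -> bool}) F (cons_ff b s).
Proof.
rewrite pair_bigA /=.
rewrite (reindex (fun p : bool * {ffun 'I_k -> bool} => cons_ff p.1 p.2)) //=.
apply: onW_bij.
exists (fun s : {ffun 'I_k.+1 -> bool} => (s ord0, [ffun j => s (lift ord0 j)])).
  move=> [b s] /=; congr pair.
    by rewrite /cons_ff ffunE unlift_none.
  by apply/ffunP => j; rewrite !ffunE liftK.
move=> s; apply/ffunP => i; rewrite /cons_ff !ffunE.
by case: unliftP => [j ->|->] //; rewrite ffunE.
Qed.

Lemma PP_eval (A R : comNzRingType) (phi : {rmorphism A -> R}) k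
  (a : 'I_k -> A) (rho : 'I_k -> R) :
  (forall i, rho i ^+ 2 = phi (a i)) -> forall d,
  (map_poly phi (PP a)).[d] =
  \prod_(s : {ffun 'I_k -> bool}) (d - \sum_(i < k) (-1) ^+ (s i) * rho i).
Proof.
elim: k a rho => [|k IH] a rho Hr d /=.
  rewrite map_polyX hornerX.
  under eq_bigr => s _ do rewrite big_ord0 subr0.
  by rewrite prodr_const card_ffun card_bool card_ord expn0 expr1.
rewrite (Tr_eval _ _ (Hr ord0)).
rewrite (IH _ (fun i => rho (lift ord0 i))); last by move=> i; apply: Hr.
rewrite (IH _ (fun i => rho (lift ord0 i))); last by move=> i; apply: Hr.
rewrite big_ffunS big_bool /= mulrC.
have Hc b (s : {ffun 'I_k -> bool}) :
  \sum_(i < k) (-1) ^+ (cons_ff b s (lift ord0 i)) * rho (lift ord0 i) =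
  \sum_(i < k) (-1) ^+ (s i) * rho (lift ord0 i).
  by apply: eq_bigr => i _; rewrite /cons_ff ffunE liftK.
congr (_ * _); apply: eq_bigr => s _; rewrite big_ord_recl Hc /cons_ff ffunE unlift_none /=;
  rewrite ?expr0 ?expr1; ring.
Qed.
Lemma sum_seq_pred1 (V : nmodType) (T : eqType) (s : seq T) (x : T) (F : T -> V) :
  uniq s -> x \in s -> \sum_(y <- s | y == x) F y = F x.
Proof.
move=> Hu Hx; rewrite -big_filter.
have -> : [seq y <- s | y == x] = [:: x] by exact: filter_pred1_uniq.
by rewrite big_seq1.
Qed.

Lemma poly_allroot0 (R : numDomainType) (r : {poly R}) :
  (forall s, r.[s] = 0) -> r = 0.
Proof.
move=> H; apply/eqP; apply/negPn/negP => Hr.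
have Hu : uniq [seq i%:R : R | i <- iota 0 (size r)].
  rewrite map_inj_uniq ?iota_uniq //.
  by move=> i j /eqP; rewrite eqr_nat => /eqP.
have Hall : all (root r) [seq i%:R | i <- iota 0 (size r)].
  by apply/allP => x _; rewrite /root H.
have := max_poly_roots Hr Hall Hu.
by rewrite size_map size_iota ltnn.
Qed.

Definition restr n (m : 'X_{1..n.+1}) : 'X_{1..n} := [multinom m (lift ord0 i) | i < n].

Lemma restr_eq n (m m0 : 'X_{1..n.+1}) :
  (m ord0 == m0 ord0) && (restr m == restr m0) = (m == m0).
Proof.
apply/idP/idP.
  move=> /andP[/eqP H0 /eqP H1]; apply/eqP/mnmP => i.
  case: (unliftP ord0 i) => [j ->|->] //.
  by have := congr1 (fun m : 'X_{1..n} => m j) H1; rewrite /restr !mnmE.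
by move=> /eqP ->; rewrite !eqxx.
Qed.

Lemma mpoly_allroot0 (R : numDomainType) n (p : {mpoly R[n]}) :
  (forall v, p.@[v] = 0) -> p = 0.
Proof.
elim: n p => [|n IH] p H.
  have E := H (fun _ => 0); rewrite -(mpolyKC p) mevalC in E.
  by rewrite -(mpolyKC p) E.
apply/mpolyP => m0; rewrite mcoeff0.
case Hin: (m0 \in msupp p); last by apply: memN_msupp_eq0; rewrite Hin.
set k0 := m0 ord0.
pose q : {mpoly R[n]} :=
  \sum_(m <- msupp p | m ord0 == k0) p@_m *: 'X_[restr m].
have Hq : q = 0.
  apply: IH => v'.
  pose v (s : R) (i : 'I_n.+1) := if unlift ord0 i is Some j then v' j else s.
  pose r : {poly R} := \sum_(m <- msupp p)
      (p@_m * \prod_(j < n) v' j ^+ (m (lift ord0 j))) *: 'X^(m ord0).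
  have Hr : r = 0.
    apply: poly_allroot0 => s.
    rewrite -(H (v s)) mevalE /r horner_sum; apply: eq_bigr => m _.
    rewrite hornerZ hornerXn big_ord_recl /v unlift_none -mulrA; congr (_ * _).
    rewrite mulrC; congr (_ * _); apply: eq_bigr => j _; by rewrite liftK.
  have := congr1 (fun r : {poly R} => r`_k0) Hr.
  rewrite coef0 coef_sumMXn => <-.
  rewrite /q raddf_sum /=; apply: eq_bigr => m _.
  by rewrite mevalZ mevalX; congr (_ * _); apply: eq_bigr => j _; rewrite /restr mnmE.
have := congr1 (mcoeff (restr m0)) Hq; rewrite mcoeff0 /q raddf_sum /=.
under eq_bigr => m _ do rewrite mcoeffZ mcoeffX.
have -> : \sum_(m <- msupp p | m ord0 == k0) p@_m * (restr m == restr m0)%:R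
    = \sum_(m <- msupp p | m == m0) p@_m.
  rewrite big_mkcond [RHS]big_mkcond; apply: eq_bigr => m _; rewrite -restr_eq.
  by case: (m ord0 == k0); case: (restr m == restr m0); rewrite /= ?mulr1 ?mulr0.
by rewrite sum_seq_pred1 ?msupp_uniq // => ->.
Qed.
Definition ray (R : comNzRingType) n (c : {mpoly R[n]}) (y : 'I_n -> R) : {poly R} :=
  \sum_(m <- msupp c) (c@_m * \prod_(j < n) y j ^+ m j) *: 'X^(mdeg m).

Definition hom (R : comNzRingType) n (c : {mpoly R[n]}) (M : nat) : {mpoly R[n]} :=
  \sum_(m <- msupp c | mdeg m == M) c@_m *: 'X_[m].

Lemma ray_eval (R : comNzRingType) n (c : {mpoly R[n]}) y t :
  (ray c y).[t] = c.@[fun j => t * y j].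
Proof.
rewrite mevalE /ray horner_sum; apply: eq_bigr => m _.
rewrite hornerZ hornerXn -mulrA; congr (_ * _).
rewrite [RHS](eq_bigr (fun j => t ^+ m j * y j ^+ m j)); last by move=> j _; rewrite exprMn.
by rewrite big_split /= prodrXr mdegE mulrC.
Qed.

Lemma ray_size (R : comNzRingType) n (c : {mpoly R[n]}) y :
  (size (ray c y) <= msize c)%N.
Proof.
apply/leq_sizeP => j Hj; rewrite /ray coef_sumMXn big1_seq //.
move=> m /andP[/= /eqP Hm Hin].
by have := msize_mdeg_lt Hin; rewrite Hm ltnNge Hj.
Qed.

Lemma ray_top (R : comNzRingType) n (c : {mpoly R[n]}) y M :
  (ray c y)`_M = (hom c M).@[y].
Proof.
rewrite /ray coef_sumMXn /hom raddf_sum /=; apply: eq_bigr => m _.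
by rewrite mevalZ mevalX.
Qed.

Lemma hom_top (R : comNzRingType) n (c : {mpoly R[n]}) M :
  msize c = M.+1 -> hom c M != 0.
Proof.
move=> Hs.
have Hc : c != 0 by apply/eqP => Hc; rewrite Hc msize0 in Hs.
have Hd := mlead_deg Hc; rewrite Hs in Hd; case: Hd => Hd.
apply/eqP => /(congr1 (mcoeff (mlead c))); rewrite mcoeff0 /hom raddf_sum /=.
under eq_bigr => m _ do rewrite mcoeffZ mcoeffX.
have -> : \sum_(m <- msupp c | mdeg m == M) c@_m * (m == mlead c)%:R
    = \sum_(m <- msupp c | m == mlead c) c@_m.
  rewrite big_mkcond [RHS]big_mkcond; apply: eq_bigr => m _.
  have [->|Hne] := eqVneq m (mlead c); first by rewrite Hd !eqxx /= mulr1.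
  by rewrite mulr0; case: (mdeg m == M).
rewrite (@sum_seq_pred1 _ _ (msupp c) (mlead c) (fun m => c@_m)) ?msupp_uniq ?mlead_supp //.
by move/eqP; rewrite mcoeff_eq0 mlead_supp.
Qed.

Lemma msize_bound (R : numDomainType) n (c : {mpoly R[n]}) B :
  (forall y, (size (ray c y) <= B.+1)%N) -> (msize c <= B.+1)%N.
Proof.
move=> H; rewrite leqNgt; apply/negP => Hlt.
case E: (msize c) Hlt => [//|M] HM.
have := hom_top E; move/negP; apply; apply/eqP/mpoly_allroot0 => y.
rewrite -ray_top; apply/(leq_sizeP _ _ (H y)); by [].
Qed.
Section Growth.
Variable R : realFieldType.

Lemma expr_mono (t : R) i j : 1 <= t -> (i <= j)%N -> t ^+ i <= t ^+ j.
Proof.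
move=> Ht Hij; rewrite -(subnKC Hij) exprD.
have H0 : 0 <= t ^+ i by apply: exprn_ge0; lra.
have H1 : 1 <= t ^+ (j - i) by apply: exprn_ege1.
nra.
Qed.

Lemma sum_bound (q : {poly R}) N t : 1 <= t ->
  `|\sum_(i < N) q`_i * t ^+ i| * t <= (\sum_(i < N) `|q`_i|) * t ^+ N.
Proof.
move=> Ht.
have Ht0 : 0 <= t by lra.
apply: le_trans (ler_wpM2r Ht0 (ler_norm_sum _ _ _)) _.
rewrite !mulr_suml; apply: ler_sum => i _.
rewrite normrM (ger0_norm (exprn_ge0 _ Ht0)) -mulrA -exprSr.
apply: ler_wpM2l; first exact: normr_ge0.
by apply: expr_mono.
Qed.

Lemma growth_upper (q : {poly R}) C T m :
  (forall t, T <= t -> `|q.[t]| <= C * t ^+ m) -> (size q <= m.+1)%N.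
Proof.
move=> H; rewrite leqNgt; apply/negP => Hlt.
case E: (size q) Hlt => [//|N] HN.
have Hl : q`_N != 0.
  have := lead_coef_eq0 q; rewrite lead_coefE E /= => ->.
  by rewrite -size_poly_eq0 E.
set S := \sum_(i < N) `|q`_i|.
have HS : 0 <= S by apply: sumr_ge0 => i _; exact: normr_ge0.
have Hlp : 0 < `|q`_N| by rewrite normr_gt0.
set t := 1 + `|T| + (`|C| + S) / `|q`_N|.
have Htd : t = 1 + `|T| + (`|C| + S) / `|q`_N| by [].
clearbody t.
have Hx : 0 <= (`|C| + S) / `|q`_N|.
  apply: divr_ge0; last exact: ltW.
  by apply: addr_ge0 => //; exact: normr_ge0.
have Ht1 : 1 <= t by rewrite Htd; have := normr_ge0 T; lra.
have HtT : T <= t by rewrite Htd; have := ler_norm T; lra.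
have Ht0 : 0 < t by lra.
have Hq := H t HtT.
have Hsb := sum_bound q N Ht1.
rewrite (horner_coef q t) E big_ord_recr /= in Hq.
set Z := \sum_(i < N) q`_i * t ^+ i in Hq Hsb.
have HtN : 0 < t ^+ N by apply: exprn_gt0.
have Hm1 : t ^+ m.+1 <= t ^+ N by apply: expr_mono.
have Hcp : C * t ^+ m * t <= `|C| * t ^+ N.
  rewrite -mulrA -exprSr; apply: le_trans (ler_wpM2r _ (ler_norm C)) _.
    by apply: exprn_ge0; lra.
  by apply: ler_wpM2l => //; exact: normr_ge0.
have Htri : `|q`_N| * t ^+ N <= `|Z + q`_N * t ^+ N| + `|Z|.
  have := ler_normB (Z + q`_N * t ^+ N) Z.
  by rewrite addrC addKr normrM (gtr0_norm HtN) addrC.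
have Hk : `|q`_N| * t ^+ N * t <= (`|C| + S) * t ^+ N.
  have H2 : `|Z + q`_N * t ^+ N| * t <= C * t ^+ m * t by apply: ler_wpM2r => //; lra.
  have H3 : `|q`_N| * t ^+ N * t <= (`|Z + q`_N * t ^+ N| + `|Z|) * t by apply: ler_wpM2r => //; lra.
  rewrite -/S in Hsb; lra.
have Hk' : `|q`_N| * t <= `|C| + S.
  rewrite -(ler_pM2r HtN); nra.
have : (`|C| + S) / `|q`_N| < t by rewrite Htd; have := normr_ge0 T; lra.
rewrite ltr_pdivrMr // mulrC; lra.
Qed.

Lemma growth_lower (q : {poly R}) c T m : 0 < c ->
  (forall t, T <= t -> c * t ^+ m <= `|q.[t]|) -> (m < size q)%N.
Proof.
move=> Hc H; rewrite ltnNge; apply/negP => Hle.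
set S := \sum_(i < m) `|q`_i|.
have HS : 0 <= S by apply: sumr_ge0 => i _; exact: normr_ge0.
set t := 1 + `|T| + S / c.
have Htd : t = 1 + `|T| + S / c by [].
clearbody t.
have Hx : 0 <= S / c by apply: divr_ge0 => //; exact: ltW.
have Ht1 : 1 <= t by rewrite Htd; have := normr_ge0 T; lra.
have HtT : T <= t by rewrite Htd; have := ler_norm T; lra.
have Hq := H t HtT.
have Hsb := sum_bound q m Ht1.
rewrite -(horner_coef_wide t Hle) in Hsb.
have Htm : 0 < t ^+ m by apply: exprn_gt0; lra.
have Hk : c * t <= S.
  rewrite -(ler_pM2r Htm).
  have : c * t ^+ m * t <= `|q.[t]| * t by apply: ler_wpM2r => //; lra.
  rewrite -/S in Hsb; lra.
have : S / c < t by rewrite Htd; have := normr_ge0 T; lra.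
rewrite ltr_pdivrMr // mulrC; lra.
Qed.
End Growth.
Section Dist.
Variable R : rcfType.

Lemma dist_ray n (u y : 'I_n -> R) : exists K, 0 <= K /\ forall t, 1 <= t ->
  `|edist u (fun j => t * y j) - t * Num.sqrt (\sum_j y j ^+ 2)| <= K.
Proof.
set a := \sum_j u j ^+ 2; set b := \sum_j u j * y j; set Y2 := \sum_j y j ^+ 2.
have HY2 : 0 <= Y2 by apply: sumr_ge0 => j _; exact: sqr_ge0.
have Ha : 0 <= a by apply: sumr_ge0 => j _; exact: sqr_ge0.
have Hexp t : \sum_j (u j - t * y j) ^+ 2 = a - 2 * t * b + t ^+ 2 * Y2.
  rewrite (eq_bigr (fun j => u j ^+ 2 - (2 * t) * (u j * y j) + t ^+ 2 * y j ^+ 2)).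
    by rewrite big_split sumrB /= -!mulr_sumr.
  by move=> j _; ring.
have Hr t : edist u (fun j => t * y j) = Num.sqrt (a - 2 * t * b + t ^+ 2 * Y2).
  by rewrite /edist -Hexp.
have Hpos t : 0 <= a - 2 * t * b + t ^+ 2 * Y2.
  by rewrite -Hexp; apply: sumr_ge0 => j _; exact: sqr_ge0.
have [HY0|HYn] := eqVneq Y2 0.
  have Hy j : y j = 0.
    have := @psumr_eq0P _ _ _ _ (fun j _ => sqr_ge0 (y j)) HY0 j isT.
    by move/eqP; rewrite sqrf_eq0 => /eqP.
  have Hb : b = 0 by rewrite /b big1 // => j _; rewrite Hy mulr0.
  exists (Num.sqrt a); split; first exact: sqrtr_ge0.
  move=> t _; rewrite Hr HY0 Hb sqrtr0 !mulr0 !subr0 addr0 ger0_norm //.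
  exact: sqrtr_ge0.
have HYp : 0 < Y2 by rewrite lt_def HYn HY2.
set Y := Num.sqrt Y2.
have HY : 0 < Y by rewrite sqrtr_gt0.
have HYY : Y ^+ 2 = Y2 by rewrite sqr_sqrtr.
exists ((`|a| + 2 * `|b|) / Y); split.
  by apply: divr_ge0; [have := normr_ge0 a; have := normr_ge0 b; lra | exact: ltW].
move=> t Ht; rewrite Hr; set r := Num.sqrt _.
have Hr0 : 0 <= r by exact: sqrtr_ge0.
have Hrr : r ^+ 2 = a - 2 * t * b + t ^+ 2 * Y2 by rewrite sqr_sqrtr.
have Hprod : (r - t * Y) * (r + t * Y) = a - 2 * t * b.
  rewrite -subr_sqr Hrr exprMn HYY; ring.
have H1 : `|r - t * Y| * (r + t * Y) <= `|a| + t * (2 * `|b|).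
  rewrite -(ger0_norm (_ : 0 <= r + t * Y)); last by nra.
  rewrite -normrM Hprod.
  apply: le_trans (ler_normB _ _) _.
  rewrite !normrM (ger0_norm (_ : 0 <= 2)) ?(ger0_norm (_ : 0 <= t)) //; try lra.
have H2 : `|r - t * Y| * (t * Y) <= `|r - t * Y| * (r + t * Y).
  by apply: ler_wpM2l; [exact: normr_ge0 | lra].
have H3 : `|a| <= t * `|a| by have := normr_ge0 a; nra.
rewrite ler_pdivlMr //.
have Hn := normr_ge0 (r - t * Y).
have : t * (`|r - t * Y| * Y) <= t * (`|a| + 2 * `|b|) by nra.
rewrite ler_pM2l //; lra.
Qed.
End Dist.
Section Comb.
Variable R : rcfType.
Variable k : nat.

Definition esum (s : {ffun 'I_k -> bool}) : R := \sum_(i < k) (-1) ^+ (s i).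
Definition cnt (s : {ffun 'I_k -> bool}) : nat := #|[set i | s i]|.

Lemma esumE s : esum s = k%:R - (2 * cnt s)%:R.
Proof.
rewrite /esum (eq_bigr (fun i => 1 - 2 * (s i : nat)%:R)); last first.
  by move=> i _; case: (s i); rewrite /= ?expr0 ?expr1 ?mulr0 ?mulr1 ?subr0 //; lra.
rewrite sumrB sumr_const card_ord -mulr_sumr -natr_sum natrM.
congr (_ - _ * _); congr (_%:R).
rewrite /cnt cardsE -sum1_card [RHS]big_mkcond /=; apply: eq_bigr => i _.
by rewrite -topredE /=; case: (s i).
Qed.

Lemma esum_eq0 s : (esum s == 0) = (k == 2 * cnt s)%N.
Proof. by rewrite esumE subr_eq0 eqr_nat. Qed.

Lemma esum_ge1 s : esum s != 0 -> 1 <= `|esum s|.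
Proof.
rewrite esum_eq0 esumE => Hne.
case: (leqP (2 * cnt s) k) => H.
  rewrite -natrB // ger0_norm ?ler0n // ler1n; lia.
rewrite -opprB -natrB ?(ltnW H) // normrN ger0_norm ?ler0n // ler1n; lia.
Qed.

Lemma esum_le s : `|esum s| <= k%:R.
Proof.
apply: le_trans (ler_norm_sum _ _ _) _.
rewrite (eq_bigr (fun _ => 1)); first by rewrite sumr_const card_ord.
by move=> i _; rewrite normrX normrN1 expr1n.
Qed.

Lemma card_bal : #|[pred s : {ffun 'I_k -> bool} | esum s == 0]| =
  (if odd k then 0 else 'C(k, k./2))%N.
Proof.
have Hk := odd_double_half k.
have E : forall s, (esum s == 0) = (~~ odd k) && (cnt s == k./2).
  move=> s; rewrite esum_eq0; rewrite -muln2 in Hk.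
  case: (odd k) Hk => /= Hk; [apply/negbTE/eqP; lia | apply/eqP/eqP; lia].
case Ho: (odd k).
  by apply: eq_card0 => s; rewrite inE E Ho.
rewrite (eq_card (B := [pred s : {ffun 'I_k -> bool} | cnt s == k./2])); last first.
  by move=> s; rewrite !inE E Ho.
pose F (s : {ffun 'I_k -> bool}) : {set 'I_k} := [set i | s i].
have Finj : injective F.
  move=> s1 s2 H; apply/ffunP => i.
  by have := congr1 (fun A : {set 'I_k} => i \in A) H; rewrite /F !inE.
rewrite -(card_imset _ Finj).
have -> : [set F x | x in [pred s : {ffun 'I_k -> bool} | cnt s == k./2]] =
          [set A : {set 'I_k} | #|A| == k./2].
  apply/setP => A; rewrite inE; apply/imsetP/idP.
    by move=> [s Hs ->]; rewrite inE in Hs.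
  move=> HA; exists [ffun i => i \in A]; last first.
    by apply/setP => i; rewrite /F inE ffunE.
  rewrite inE /cnt.
  have -> : [set i | [ffun i => i \in A] i] = A by apply/setP => i; rewrite inE ffunE.
  exact: HA.
by rewrite card_draws card_ord.
Qed.

Lemma card_unbal : #|[pred s : {ffun 'I_k -> bool} | esum s != 0]| =
  (2 ^ k - (if odd k then 0 else 'C(k, k./2)))%N.
Proof.
have := cardC [pred s : {ffun 'I_k -> bool} | esum s == 0].
rewrite card_ffun card_bool card_ord card_bal => <-.
rewrite addKn; apply: eq_card => s; by rewrite !inE.
Qed.
End Comb.
Lemma growth_pnk (R : rcfType) n k (u : 'I_k -> 'I_n -> R) d (y : 'I_n -> R) :
  exists C T, forall t, T <= t ->
    `|pnk_val u d (fun j => t * y j)| <=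
      C * t ^+ #|[pred s : {ffun 'I_k -> bool} | @esum R k s != 0]|.
Proof.
have [K HK] := fin_all_exists (fun i => dist_ray (u i) y).
set Y := Num.sqrt (\sum_j y j ^+ 2).
set KK := \sum_i K i.
have HY : 0 <= Y by exact: sqrtr_ge0.
have HK0 : 0 <= KK by apply: sumr_ge0 => i _; exact: (HK i).1.
set L := `|d| + k%:R * Y + KK.
exists (\prod_(s : {ffun 'I_k -> bool}) L), 1 => t Ht.
rewrite /pnk_val normr_prod.
have Hf (s : {ffun 'I_k -> bool}) : 0 <= `|d - \sum_i (-1) ^+ (s i) * edist (u i) (fun j => t * y j)| <=
    L * (if @esum R k s != 0 then t else 1).
  apply/andP; split; first exact: normr_ge0.
  set D := \sum_i (-1) ^+ (s i) * (edist (u i) (fun j => t * y j) - t * Y).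
  have Hsplit : \sum_i (-1) ^+ (s i) * edist (u i) (fun j => t * y j) =
      @esum R k s * (t * Y) + D.
    rewrite /D /esum mulr_suml -big_split; apply: eq_bigr => i _ /=; ring.
  have HD : `|D| <= KK.
    apply: le_trans (ler_norm_sum _ _ _) _; apply: ler_sum => i _.
    rewrite normrM normrX normrN1 expr1n mul1r; exact: (HK i).2 t Ht.
  have He := @esum_le R k s.
  have Hkp : 0 <= k%:R * Y :> R by apply: mulr_ge0 => //; exact: ler0n.
  rewrite Hsplit; case: eqP => [He0|He0] /=.
    rewrite He0 mul0r add0r mulr1.
    apply: le_trans (ler_normB _ _) _; rewrite /L; lra.
  have Hd := normr_ge0 d.
  have H1 : `|@esum R k s * (t * Y)| <= k%:R * Y * t.
    have HtY : 0 <= t * Y by apply: mulr_ge0 => //; lra.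
    rewrite normrM (ger0_norm HtY) (_ : k%:R * Y * t = k%:R * (t * Y)); last by ring.
    exact: ler_wpM2r.
  have H2 := ler_normB d (@esum R k s * (t * Y) + D).
  have H3 := ler_normD (@esum R k s * (t * Y)) D.
  rewrite /L; nra.
apply: (le_trans (ler_prod _ (fun s _ => Hf s))).
rewrite big_split /=; apply: ler_wpM2l.
  have Hkp : 0 <= k%:R * Y :> R by apply: mulr_ge0 => //; exact: ler0n.
  apply: prodr_ge0 => s _; rewrite /L; have := normr_ge0 d; lra.
by rewrite -prodr_const [X in _ <= X]big_mkcond /=.
Qed.
Lemma growth_pnk_low (R : rcfType) n k (u : 'I_k -> 'I_n -> R) : (0 < n)%N ->
  exists (y : 'I_n -> R) d c T, 0 < c /\ forall t, T <= t ->
    c * t ^+ #|[pred s : {ffun 'I_k -> bool} | @esum R k s != 0]| <=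
      `|pnk_val u d (fun j => t * y j)|.
Proof.
case: n u => [//|n] u _.
pose y := fun j : 'I_n.+1 => ((val j == 0)%N)%:R : R.
have HY : Num.sqrt (\sum_j y j ^+ 2) = 1.
  rewrite big_ord_recl big1 ?addr0 /y /= ?expr1n ?sqrtr1 //.
  by move=> j _; rewrite /= expr0n.
have [K HK] := fin_all_exists (fun i => dist_ray (u i) y).
rewrite HY in HK.
set KK := \sum_i K i.
have HK0 : 0 <= KK by apply: sumr_ge0 => i _; exact: (HK i).1.
exists y, (1 + KK), (2^-1 ^+ #|[pred s : {ffun 'I_k -> bool} | @esum R k s != 0]|),
  (1 + 2 * (1 + 2 * KK)).
split; first by apply: exprn_gt0; rewrite invr_gt0; lra.
move=> t Ht.
rewrite /pnk_val normr_prod.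
have Hf (s : {ffun 'I_k -> bool}) : 0 <= (if @esum R k s != 0 then t / 2 else 1) <=
    `|1 + KK - \sum_i (-1) ^+ (s i) * edist (u i) (fun j => t * y j)|.
  set D := \sum_i (-1) ^+ (s i) * (edist (u i) (fun j => t * y j) - t * 1).
  have Hsplit : \sum_i (-1) ^+ (s i) * edist (u i) (fun j => t * y j) =
      @esum R k s * t + D.
    rewrite /D /esum mulr_suml -big_split; apply: eq_bigr => i _ /=; ring.
  have HD : `|D| <= KK.
    apply: le_trans (ler_norm_sum _ _ _) _; apply: ler_sum => i _.
    rewrite normrM normrX normrN1 expr1n mul1r; apply: (HK i).2; lra.
  rewrite Hsplit; case: eqP => [He0|He0] /=.
    rewrite He0 mul0r add0r.
    have := ler_normD (1 + KK - D) D; rewrite subrK ger0_norm; last by lra.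
    lra.
  have He := @esum_ge1 R k s (introN eqP He0).
  have Ht0 : 0 <= t by lra.
  have H1 : t <= `|@esum R k s * t|.
    rewrite normrM (ger0_norm Ht0); have := normr_ge0 (@esum R k s); nra.
  have := ler_normD (- (1 + KK - (@esum R k s * t + D))) (1 + KK - D).
  rewrite normrN (ger0_norm (_ : 0 <= 1 + KK - D)); last first.
    have := ler_norm D; lra.
  rewrite (_ : - (1 + KK - (@esum R k s * t + D)) + (1 + KK - D) = @esum R k s * t); last by ring.
  have := ler_norm (- D); rewrite normrN; lra.
apply: le_trans (ler_prod _ (fun s _ => Hf s)).
rewrite -[X in _ <= X]big_mkcond /= prodr_const.
rewrite -exprMn mulrC.
by [].
Qed.
Unset Implicit Arguments. Set Strict Implicit.
Theorem theorem4p3 (R : rcfType) (n k : nat) (u : 'I_k -> 'I_n -> R) :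
  (1 <= n)%N -> (1 <= k)%N ->
  exists P : {poly {mpoly R[n]}},
    (forall (d : R) (x : 'I_n -> R),
        (map_poly (fun q : {mpoly R[n]} => q.@[x]) P).[d] = pnk_val u d x)
    /\ P \is monic /\ size P = (2 ^ k).+1
    /\ (\max_(i < size P) msize P`_i =
         (if odd k then 2 ^ k else 2 ^ k - 'C(k, k./2)).+1)%N.
Proof.
move=> Hn Hk.
pose a := fun i : 'I_k => \sum_(j < n) ((u i j)%:MP - 'X_j) ^+ 2 : {mpoly R[n]}.
pose P := PP a.
have [SP MP] := PP_size a.
have Heval : forall d x, (map_poly (fun q : {mpoly R[n]} => q.@[x]) P).[d] = pnk_val u d x.
  move=> d x.
  rewrite /pnk_val -(PP_eval (phi := meval x) (a := a) (rho := fun i => edist (u i) x)) //.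
  move=> i; rewrite /edist sqr_sqrtr; last by apply: sumr_ge0 => j _; exact: sqr_ge0.
  rewrite /a rmorph_sum; apply: eq_bigr => j _.
  by rewrite rmorphXn rmorphB /= mevalC mevalXU.
exists P; split; first exact: Heval.
split; first exact: MP.
split; first exact: SP.
set mm := #|[pred s : {ffun 'I_k -> bool} | @esum R k s != 0]|.
have -> : (if odd k then 2 ^ k else 2 ^ k - 'C(k, k./2))%N = mm.
  by rewrite /mm card_unbal; case: (odd k); rewrite ?subn0.
have HQ : forall d y t,
    (\sum_(j < size P) d ^+ j *: ray P`_j y).[t] = pnk_val u d (fun j => t * y j).
  move=> d y t; rewrite -Heval horner_sum.
  rewrite (@horner_coef_wide _ (size P)); last first.
    apply/leq_sizeP => i Hi; rewrite coef_map_id0 ?meval0 //.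
    by rewrite nth_default // meval0.
  apply: eq_bigr => j _; rewrite hornerZ ray_eval coef_map_id0 ?meval0 //.
  by rewrite mulrC.
have Hup : forall j, (j < size P)%N -> (msize P`_j <= mm.+1)%N.
  move=> j Hj; apply: msize_bound => y.
  apply/leq_sizeP => i Hi.
  pose w := \poly_(l < size P) (ray P`_l y)`_i.
  suff : w = 0 by move/(congr1 (fun p : {poly R} => p`_j)); rewrite coef_poly Hj coef0.
  apply: poly_allroot0 => d.
  have [C [T HCT]] := growth_pnk u d y.
  have Hsz : (size (\sum_(l < size P) d ^+ l *: ray P`_l y)%R <= mm.+1)%N.
    apply: (@growth_upper _ _ C T) => t Ht; rewrite HQ; exact: HCT.
  have E := (leq_sizeP _ _ Hsz) i Hi.
  rewrite coef_sum in E; rewrite horner_poly; apply: etrans E; apply: eq_bigr => l _.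
  by rewrite coefZ mulrC.
have [j [Hj Hlow]] : exists j, (j < size P)%N /\ (mm < msize P`_j)%N.
  have [y [d [c [T [Hc HT]]]]] := growth_pnk_low u Hn.
  have Hs : (mm < size (\sum_(l < size P) d ^+ l *: ray P`_l y)%R)%N.
    apply: (@growth_lower _ _ c T) => // t Ht; rewrite HQ; exact: HT.
  case E : [exists l : 'I_(size P), (mm < msize P`_l)%N].
    by move/existsP: E => [l Hl]; exists l; split.
  exfalso; move/negbT/existsPn: E => H.
  move: Hs; rewrite ltnNge => /negP; apply.
  apply/leq_sizeP => i Hi; rewrite coef_sum big1 // => l _.
  rewrite coefZ.
  have Hl : (size (ray P`_l y) <= mm)%N.
    apply: leq_trans (ray_size _ _) _; by rewrite leqNgt H.
  by rewrite (leq_sizeP _ _ Hl) // mulr0.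
apply/eqP; rewrite eqn_leq; apply/andP; split.
  by apply/bigmax_leqP => i _; exact: Hup i (ltn_ord i).
apply: leq_trans Hlow _.
exact: (@leq_bigmax_cond _ xpredT (fun i : 'I_(size P) => msize P`_i) (Ordinal Hj)).
Qed.
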